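(* Let $G=(X,E,w)$ be a connected weighted graph with total weight $W$, $M\subseteq X$ nonempty, $\sigma$ a probability distribution with $S=\mathrm{supp}(\sigma)\subseteq X\setminus M$, and $C>0$. Let $G'$ be the weighted graph on $X'=\{0,1\}\times X$ with weights $w'_{(0,u),(0,v)}=w_{u,v}$ for all $u,v\in X$, $w'_{(0,u),(1,u)}=w'_{(1,u),(0,u)}=\sigma_uW/C$ for all $u\in X$, and all other weights $0$; let $W'$, $\pi'$, $R'$, $C'$ denote the corresponding quantities on $G'$, $S'=\{1\}\times S$, $M'=\{0\}\times M$. Then $\pi'(S')=\frac{1}{C+2}$. Moreover, if $\rho$ is a probability distribution on $S$ with $\sum_{u\in S}\rho_u^2/\sigma_u=1/p$, and $\rho'$ is the distribution on $X'$ with $\rho'_{(1,u)}=\rho_u$ (zero elsewhere), then \[ C'_{\rho',M'}=\Big(\frac{C_{\rho,M}}{C}+\frac1p\Big)(C+2), \qquad\text{and hence}\qquad \frac{1}{C'_{S',M'}\,\pi'(S')}\ge\frac12\min\Big\{p,\frac{C}{C_{\rho,M}}\Big\}. \]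
   Context: For a weighted graph: $w_u=\sum_vw_{u,v}$, $W=\sum_{u,v}w_{u,v}$ (sum over ordered pairs), $\pi_u=w_u/W$, $\pi(A)=\sum_{u\in A}\pi_u$. A unit flow from a distribution $\sigma$ supported outside $M$ to $M$ is $p:X\times X\to\mathbb R$ with $p_{u,v}=0$ if $w_{u,v}=0$, $p_{u,v}=-p_{v,u}$, $\sum_vp_{u,v}=\sigma_u$ for $u\notin M$, $\sum_{u\in M}\sum_{v\notin M}p_{u,v}=-1$. $R_{\sigma,M}=\min_p\sum_{\{u,v\}}p_{u,v}^2/w_{u,v}$ (unordered pairs), $C_{\sigma,M}=WR_{\sigma,M}$, $R_{S,M}=\min_{\sigma:\mathrm{supp}\sigma\subseteq S}R_{\sigma,M}$, $C_{S,M}=WR_{S,M}$. *)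

(* Defs.v *)
From HB Require Import structures.
From Stdlib Require Import Reals ClassicalEpsilon Relation_Operators.
From mathcomp Require Import all_boot.

Set Implicit Arguments.
Unset Strict Implicit.
Unset Printing Implicit Defensive.

Local Open Scope R_scope.

HB.instance Definition _ := Monoid.isComLaw.Build R R0 Rplus
  (fun a b c => esym (Rplus_assoc a b c)) Rplus_comm Rplus_0_l.

Notation "\rsum_ ( i : T ) F" := (\big[Rplus/R0]_(i : T) F)
  (at level 41, F at level 41, i at level 50).
Notation "\rsum_ ( i 'in' A ) F" := (\big[Rplus/R0]_(i in A) F)
  (at level 41, F at level 41, i, A at level 50).

Section Graph.
Variable X : finType.
Implicit Types (w p : X -> X -> R) (sigma : X -> R) (M S : {set X}).

Definition weighted_graph w : Prop :=
  (forall u v, 0 <= w u v) /\ (forall u v, w u v = w v u).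

Definition connected w : Prop :=
  forall u v, clos_refl_trans X (fun a b => 0 < w a b) u v.

Definition wdeg w u : R := \rsum_(v : X) w u v.
Definition Wtot w : R := \rsum_(u : X) wdeg w u.
Definition pi w u : R := wdeg w u / Wtot w.
Definition piset w (A : {set X}) : R := \rsum_(u in A) pi w u.

Definition distribution sigma : Prop :=
  (forall u, 0 <= sigma u) /\ \rsum_(u : X) sigma u = 1.

Definition supp_sub sigma (A : {set X}) : Prop :=
  forall u, sigma u <> 0 -> u \in A.

Definition unit_flow w sigma M p : Prop :=
  (forall u v, w u v = 0 -> p u v = 0) /\
  (forall u v, p u v = - p v u) /\
  (forall u, u \notin M -> \rsum_(v : X) p u v = sigma u) /\
  \rsum_(u in M) \rsum_(v in ~: M) p u v = -1.

(* energy  sum over unordered pairs {u,v} of p_{u,v}^2 / w_{u,v}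
   (terms with w_{u,v} = 0 vanish since then p_{u,v} = 0; diagonal terms
   vanish by antisymmetry); written as half the sum over ordered pairs. *)
Definition energy w p : R :=
  / 2 * \rsum_(u : X) \rsum_(v : X)
          (if Rlt_dec 0 (w u v) then (p u v)^2 / w u v else 0).

End Graph.

Definition is_glb (P : R -> Prop) (m : R) : Prop :=
  (forall x, P x -> m <= x) /\ (forall b, (forall x, P x -> b <= x) -> b <= m).
Definition Rinf (P : R -> Prop) : R := epsilon (inhabits R0) (is_glb P).

Section Resistance.
Variable X : finType.
Implicit Types (w p : X -> X -> R) (sigma : X -> R) (M S : {set X}).

(* R_{sigma,M} = min over unit flows of the energy (taken as the infimum;
   the minimum is attained). *)
Definition Reff w sigma M : R :=
  Rinf (fun e => exists p, unit_flow w sigma M p /\ e = energy w p).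
Definition Ceff w sigma M : R := Wtot w * Reff w sigma M.

Definition Reff_set w S M : R :=
  Rinf (fun r => exists sigma, distribution sigma /\ supp_sub sigma S /\
                               r = Reff w sigma M).
Definition Ceff_set w S M : R := Wtot w * Reff_set w S M.

End Resistance.

(* The doubled graph G' on X' = bool * X (false = layer 0, true = layer 1). *)
Definition doubled (X : finType) (w : X -> X -> R) (sigma : X -> R) (C : R)
  : bool * X -> bool * X -> R :=
  fun a b =>
    match a, b with
    | (false, u), (false, v) => w u v
    | (false, u), (true, v) | (true, u), (false, v) =>
        if u == v then sigma u * Wtot w / C else 0
    | (true, _), (true, _) => 0
    end.

Definition lift1 (X : finType) (rho : X -> R) : bool * X -> R :=
  fun a => if a.1 then rho a.2 else 0.

(* Main.v *)
Require Import Defs.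
From HB Require Import structures.
From Stdlib Require Import Reals ClassicalEpsilon Relation_Operators.
From mathcomp Require Import all_boot.
From Stdlib Require Import Lra.
Local Open Scope R_scope.

Section Sums.
Variable T : finType.

Lemma rsum_add (F G : T -> R) : \rsum_(i : T) (F i + G i) = \rsum_(i : T) F i + \rsum_(i : T) G i.
Proof. exact: big_split. Qed.

Lemma rsum_scal c (F : T -> R) : \rsum_(i : T) (c * F i) = c * \rsum_(i : T) F i.
Proof.
apply: (big_rec2 (fun a b => a = c * b)); first by ring.
by move=> i a b _ ->; ring.
Qed.

Lemma rsum0 : \rsum_(i : T) (0:R) = 0.
Proof. by rewrite big1. Qed.

Lemma rsum_opp (F : T -> R) : \rsum_(i : T) (- F i) = - \rsum_(i : T) F i.
Proof.
apply: (big_rec2 (fun a b => a = - b)); first by ring.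
by move=> i a b _ ->; ring.
Qed.

Lemma rsum_sub (F G : T -> R) : \rsum_(i : T) (F i - G i) = \rsum_(i : T) F i - \rsum_(i : T) G i.
Proof. by rewrite rsum_add rsum_opp. Qed.

Lemma rsum_le (F G : T -> R) : (forall i, F i <= G i) -> \rsum_(i : T) F i <= \rsum_(i : T) G i.
Proof.
move=> H; apply: (big_rec2 (fun a b => a <= b)); first lra.
move=> i a b _ Hab; have := H i; lra.
Qed.

Lemma rsum_ge0 (F : T -> R) : (forall i, 0 <= F i) -> 0 <= \rsum_(i : T) F i.
Proof. move=> H; rewrite -rsum0; apply: rsum_le => i; exact: H. Qed.

Lemma rsum_ge_term (F : T -> R) j : (forall i, 0 <= F i) -> F j <= \rsum_(i : T) F i.
Proof.
move=> H; rewrite (bigD1 j) //=.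
match goal with |- _ <= _ + ?s => have : 0 <= s end.
  apply: (big_rec (fun a => 0 <= a)); first lra.
  move=> i a _ Ha; have := H i; lra.
lra.
Qed.

Lemma rsum_delta (y : T) (F : T -> R) : \rsum_(v : T) (if v == y then F v else 0) = F y.
Proof. by rewrite -big_mkcond big_pred1_eq. Qed.

Lemma rsum_only (y : T) (F : T -> R) : (forall v, v != y -> F v = 0) -> \rsum_(v : T) F v = F y.
Proof.
move=> H; rewrite (bigD1 y) //= big1 ?Rplus_0_r // => i /H //.
Qed.

Lemma rsum_in (A : {set T}) (F : T -> R) : \rsum_(i in A) F i = \rsum_(i : T) (if i \in A then F i else 0).
Proof. by rewrite big_mkcond. Qed.

Lemma rsum_ext (F G : T -> R) : (forall i, F i = G i) -> \rsum_(i : T) F i = \rsum_(i : T) G i.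
Proof. by move=> H; apply: eq_bigr => i _. Qed.

End Sums.

Lemma rsum_pair (I J : finType) (G : I * J -> R) :
  \rsum_(a : I * J) G a = \rsum_(i : I) \rsum_(j : J) G (i, j).
Proof. rewrite pair_big; apply: eq_bigr; by case. Qed.

Lemma rsum_bool (F : bool -> R) : \rsum_(i : bool) F i = F true + F false.
Proof. exact: big_bool. Qed.

Lemma glb_unique P m1 m2 : is_glb P m1 -> is_glb P m2 -> m1 = m2.
Proof.
move=> [H1 H1'] [H2 H2']; apply: Rle_antisym; [apply: H2' | apply: H1']; auto.
Qed.

Lemma Rinf_eq P m : is_glb P m -> Rinf P = m.
Proof.
move=> H; rewrite /Rinf; apply: glb_unique (H).
apply: epsilon_spec; by exists m.
Qed.

Lemma glb_exists (P : R -> Prop) L : (exists x, P x) -> (forall x, P x -> L <= x) ->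
  exists m, is_glb P m.
Proof.
move=> [x Px] HL.
have Hb : bound (fun y => P (- y)).
  exists (- L) => y Py; have := HL _ Py; lra.
have Hne : exists y, P (- y) by exists (- x); rewrite Ropp_involutive.
case: (completeness _ Hb Hne) => m [Hm1 Hm2].
exists (- m); split.
- move=> z Pz; have : - z <= m.
  + apply: Hm1; by rewrite Ropp_involutive.
  + lra.
- move=> b Hb'; have : m <= - b.
  + apply: Hm2 => y Py; have := Hb' _ Py; lra.
  + lra.
Qed.

Lemma final_ineq x a p : 0 < x -> 0 < a -> 0 < p -> x <= a + 1 / p ->
  1 / x >= 1 / 2 * Rmin p (1 / a).
Proof.
move=> Hx Ha Hp Hxa.
set m := Rmin p (1 / a).
have Hm0 : 0 < m by rewrite /m; apply: Rmin_glb_lt => //; apply: Rdiv_lt_0_compat; lra.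
have h1 : m * a <= 1.
  have : m <= 1 / a by apply: Rmin_r.
  move=> H; have := Rmult_le_compat_r a _ _ (Rlt_le _ _ Ha) H.
  rewrite /Rdiv Rmult_1_l Rinv_l; lra.
have h2 : m * (1 / p) <= 1.
  have : m <= p by apply: Rmin_l.
  move=> H; have := Rmult_le_compat_r (1 / p) _ _ (Rlt_le _ _ (Rdiv_lt_0_compat _ _ Rlt_0_1 Hp)) H.
  rewrite /Rdiv Rmult_1_l Rinv_r; lra.
have h3 : m * x <= m * (a + 1 / p) by apply: Rmult_le_compat_l; lra.
apply: Rle_ge; apply: (Rmult_le_reg_r x) => //.
have -> : 1 / x * x = 1 by field; lra.
lra.
Qed.

Lemma bigopp (I : Type) (r : seq I) (P : pred I) (F : I -> R) :
  \big[Rplus/0]_(i <- r | P i) (- F i) = - \big[Rplus/0]_(i <- r | P i) F i.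
Proof.
apply: (big_rec2 (fun a b => a = - b)); first by ring.
by move=> i a b _ ->; ring.
Qed.


Section Flows.
Variable T : finType.
Implicit Types (w p : T -> T -> R) (d : T -> R).

Definition flowlike w p d : Prop :=
  (forall u v, w u v = 0 -> p u v = 0) /\
  (forall u v, p u v = - p v u) /\
  (forall u, \rsum_(v : T) p u v = d u).

Lemma flowlike_add w p1 p2 d1 d2 : flowlike w p1 d1 -> flowlike w p2 d2 ->
  flowlike w (fun u v => p1 u v + p2 u v) (fun u => d1 u + d2 u).
Proof.
move=> [A1 [B1 C1]] [A2 [B2 C2]]; split; [|split].
- by move=> u v H; rewrite A1 // A2 //; ring.
- by move=> u v; rewrite B1 B2; ring.
- by move=> u; rewrite rsum_add C1 C2.
Qed.
Arguments flowlike_add {w p1 p2 d1 d2}.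

Lemma flowlike_scal w p d c : flowlike w p d ->
  flowlike w (fun u v => c * p u v) (fun u => c * d u).
Proof.
move=> [A1 [B1 C1]]; split; [|split].
- by move=> u v H; rewrite A1 //; ring.
- by move=> u v; rewrite B1; ring.
- by move=> u; rewrite rsum_scal C1.
Qed.

Lemma flowlike_zero w : flowlike w (fun _ _ => 0) (fun _ => 0).
Proof. split; [|split] => //; first by move=> *; ring. by move=> u; rewrite rsum0. Qed.

Definition dlt (x z : T) : R := if z == x then 1 else 0.

Lemma path_flow w : (forall u v, w u v = w v u) -> forall x y,
  clos_refl_trans T (fun a b => 0 < w a b) x y ->
  exists p, flowlike w p (fun z => dlt x z - dlt y z).
Proof.
move=> Hsym x y H; elim: H => {x y} [x y Hxy|x|].
- exists (fun u v => (if (u == x) && (v == y) then 1 else 0) - (if (u == y) && (v == x) then 1 else 0)).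
  split; [|split].
  + move=> u v Huv.
    case: (boolP ((u == x) && (v == y))) => [/andP[/eqP Hu /eqP Hv]|_].
      subst; lra.
    case: (boolP ((u == y) && (v == x))) => [/andP[/eqP Hu /eqP Hv]|_].
      subst; rewrite Hsym in Huv; lra.
    ring.
  + move=> u v; case: (u == x); case: (v == y); case: (u == y); case: (v == x) => /=; ring.
  + move=> u; rewrite rsum_sub /dlt.
    case: (u == x); case: (u == y) => /=; rewrite ?rsum_delta ?rsum0 //.
- exists (fun _ _ => 0); split; [|split].
  + by [].
  + move=> *; lra.
  + move=> u; rewrite rsum0; lra.
- move=> x y z _ [p1 H1] _ [p2 H2].
  have Hf := flowlike_add H1 H2; exists (fun u v => p1 u v + p2 u v).
  case: Hf => A [B C]; split; [|split] => //.
  move=> u; rewrite C; lra.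
Qed.
Lemma antisym_in0 p (M : {set T}) : (forall u v, p u v = - p v u) ->
  \rsum_(u in M) \rsum_(v in M) p u v = 0.
Proof.
move=> Ha.
have E : \rsum_(u in M) \rsum_(v in M) p u v = - \rsum_(u in M) \rsum_(v in M) p u v.
  rewrite {1}exchange_big /= -bigopp; apply: eq_bigr => v _.
  rewrite -bigopp; apply: eq_bigr => u _; by rewrite Ha.
lra.
Qed.

Lemma antisym_all0 p : (forall u v, p u v = - p v u) ->
  \rsum_(u : T) \rsum_(v : T) p u v = 0.
Proof.
move=> Ha.
have E : \rsum_(u : T) \rsum_(v : T) p u v = - \rsum_(u : T) \rsum_(v : T) p u v.
  rewrite {1}exchange_big /= -bigopp; apply: eq_bigr => v _.
  rewrite -bigopp; apply: eq_bigr => u _; by rewrite Ha.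
lra.
Qed.

Lemma flow_Msum p d (M : {set T}) : (forall u v, p u v = - p v u) ->
  (forall u, u \notin M -> \rsum_(v : T) p u v = d u) ->
  \rsum_(u : T) d u = 1 -> (forall u, u \in M -> d u = 0) ->
  \rsum_(u in M) \rsum_(v in ~: M) p u v = -1.
Proof.
move=> Ha Hd H1 H0.
have E2 := antisym_all0 p Ha.
have E1 := antisym_in0 p M Ha.
have S1 : \rsum_(u : T) \rsum_(v : T) p u v =
   \rsum_(u : T) (if u \in M then \rsum_(v : T) p u v else 0) +
   \rsum_(u : T) (if u \in M then 0 else \rsum_(v : T) p u v).
  rewrite -rsum_add; apply: rsum_ext => u; case: (u \in M); ring.
have S2 : \rsum_(u : T) (if u \in M then 0 else \rsum_(v : T) p u v) = 1.
  rewrite -H1; apply: rsum_ext => u; case: (boolP (u \in M)) => Hu.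
    by rewrite H0.
  by rewrite Hd.
have S3 : \rsum_(u : T) (if u \in M then \rsum_(v : T) p u v else 0) =
   \rsum_(u in M) \rsum_(v in M) p u v + \rsum_(u in M) \rsum_(v in ~: M) p u v.
  rewrite !(@rsum_in _ M) -rsum_add; apply: rsum_ext => u.
  case: (u \in M); last by ring.
  rewrite rsum_in (@rsum_in _ (~: M)) -rsum_add; apply: rsum_ext => v.
  rewrite in_setC; case: (v \in M) => /=; ring.
rewrite S3 S2 E1 E2 in S1. move: S1. set x := \rsum_(u in M) _. move=> S1. clearbody x. lra.
Qed.

Lemma energy_ge0 w p : 0 <= energy w p.
Proof.
rewrite /energy; apply: Rmult_le_pos; first lra.
apply: rsum_ge0 => u; apply: rsum_ge0 => v.
case: Rlt_dec => H /=; last lra.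
apply: Rmult_le_pos; first exact: pow2_ge_0.
left; exact: Rinv_0_lt_compat.
Qed.

Lemma flow_seq w (m0 : T) (tau : T -> R) : (forall u v, w u v = w v u) -> connected w ->
  forall r : seq T, exists p, flowlike w p
     (fun z => \big[Rplus/0]_(u <- r) (tau u * (dlt u z - dlt m0 z))).
Proof.
move=> Hsym Hc; elim => [|u r [p Hp]].
  exists (fun _ _ => 0); split; [by []|split; [move=> *; lra|]].
  move=> z; rewrite rsum0 big_nil //.
have [f Hf] := path_flow w Hsym u m0 (Hc u m0).
have := flowlike_add Hp (flowlike_scal w f _ (tau u) Hf) => [[A [B C]]].
exists (fun u0 v => p u0 v + tau u * f u0 v); split; [|split] => //.
by move=> z; rewrite C /= big_cons; ring.
Qed.

Lemma flow_exists w (M : {set T}) tau : weighted_graph w -> connected w -> M != set0 ->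
  distribution tau -> (forall u, u \in M -> tau u = 0) ->
  exists p, unit_flow w tau M p.
Proof.
move=> [Hpos Hsym] Hc HM [Ht0 Ht1] HtM.
case/set0Pn: HM => m0 Hm0.
have [p [A [B C]]] := flow_seq w m0 tau Hsym Hc (index_enum T).
have D : forall z, z \notin M -> \rsum_(v : T) p z v = tau z.
  move=> z Hz; rewrite C (@rsum_only _ z).
    have Hzm : (z == m0) = false.
      by apply/negP => /eqP E; subst; rewrite Hm0 in Hz.
    rewrite /dlt eqxx Hzm; ring.
  move=> u Hu; rewrite /dlt.
  have Hzm : (z == m0) = false.
    by apply/negP => /eqP E; subst; rewrite Hm0 in Hz.
  have Hzu : (z == u) = false by apply/negP => /eqP E; subst; rewrite eqxx in Hu.
  rewrite Hzm Hzu; ring.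
exists p; split; [|split; [|split]] => //.
exact: (flow_Msum p tau M B D Ht1 HtM).
Qed.
End Flows.

Lemma Reff_glb (X : finType) (w : X -> X -> R) (M : {set X}) tau :
  weighted_graph w -> connected w -> M != set0 ->
  distribution tau -> (forall u, u \in M -> tau u = 0) ->
  is_glb (fun e => exists p, unit_flow w tau M p /\ e = energy w p) (Reff w tau M)
  /\ 0 <= Reff w tau M.
Proof.
move=> Hw Hc HM Ht HtM.
have [p Hp] := @flow_exists X w M tau Hw Hc HM Ht HtM.
have [m Hm] : exists m, is_glb (fun e => exists p, unit_flow w tau M p /\ e = energy w p) m.
  apply: (glb_exists _ 0); first by exists (energy w p), p.
  move=> x [q [_ ->]]; exact: energy_ge0.
rewrite /Reff (Rinf_eq _ _ Hm); split => //.
apply: (proj2 Hm) => x [q [_ ->]]; exact: energy_ge0.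
Qed.

Lemma glb_shift (P Q : R -> Prop) m k : is_glb P m -> (forall e, Q e <-> P (e - k)) ->
  is_glb Q (m + k).
Proof.
move=> [H1 H2] HQ; split.
- move=> x /HQ /H1; lra.
- move=> b Hb; have : b - k <= m.
    apply: H2 => x Px; have : Q (x + k) by apply/HQ; rewrite /Rminus Rplus_assoc Rplus_opp_r Rplus_0_r.
    move/Hb; lra.
  lra.
Qed.

Lemma rt_neq (T : Type) (Rl : T -> T -> Prop) x y : clos_refl_trans T Rl x y -> x <> y ->
  exists a b, Rl a b.
Proof.
elim => {x y} [x y H _|x H|x y z _ IH1 _ IH2 Hne]; first by exists x, y.
- by [].
- case: (classic (x = y)) => [E|]; last exact: IH1.
  subst; exact: IH2.
Qed.

Lemma unit_flow_ext (T : finType) (w0 : T -> T -> R) s1 s2 (M0 : {set T}) p :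
  (forall x, s1 x = s2 x) -> unit_flow w0 s1 M0 p -> unit_flow w0 s2 M0 p.
Proof.
move=> E [A [B [D F]]]; split; [|split; [|split]] => //.
by move=> u Hu; rewrite -E D.
Qed.


Section Doubled.
Variable X : finType.
Variable w : X -> X -> R.
Variable sigma : X -> R.
Variable C : R.
Variables (M S : {set X}).
Hypothesis Hw : weighted_graph w.
Hypothesis Hconn : connected w.
Hypothesis HM : M != set0.
Hypothesis Hsigma : distribution sigma.
Hypothesis HS : forall u, u \in S <-> sigma u <> 0.
Hypothesis HSM : [disjoint S & M].
Hypothesis HC : 0 < C.

Let W := Wtot w.
Let w' := doubled w sigma C.
Let cc u := sigma u * W / C.

Lemma notSM u : u \in S -> u \notin M.
Proof. by move=> Hu; rewrite (disjointFr HSM Hu). Qed.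

Lemma Wpos : 0 < W.
Proof.
case: Hsigma => Hs0 Hs1.
have [u Hu] : exists u, sigma u <> 0.
  apply: NNPP => H.
  have : \rsum_(u : X) sigma u = 0.
    rewrite -(rsum0 X); apply: rsum_ext => u; apply: NNPP => H'; apply: H; by exists u.
  lra.
case/set0Pn: HM => m Hm.
have HuS : u \in S by apply/HS.
have Hne : u <> m by move=> E; subst; move: (notSM _ HuS); rewrite Hm.
have [a [b Hab]] := rt_neq _ _ _ _ (Hconn u m) Hne.
have Hpos := proj1 Hw.
apply: (Rlt_le_trans _ (w a b)) => //.
apply: (Rle_trans _ (wdeg w a)).
  apply: rsum_ge_term => v; exact: Hpos.
apply: rsum_ge_term => a'; apply: rsum_ge0 => v; exact: Hpos.
Qed.

Lemma sigma_sum_S : \rsum_(u in S) sigma u = 1.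
Proof.
rewrite rsum_in -(proj2 Hsigma); apply: rsum_ext => u.
case: (boolP (u \in S)) => // Hu.
apply: NNPP => H; apply: (negP Hu); apply/HS; by auto.
Qed.

Lemma wdegF u : wdeg w' (false, u) = wdeg w u + cc u.
Proof.
rewrite /wdeg rsum_pair rsum_bool Rplus_comm; congr (_ + _).
rewrite (@rsum_only _ u) /w' /doubled ?eqxx //.
by move=> v Hv; rewrite /= eq_sym (negbTE Hv).
Qed.

Lemma wdegT u : wdeg w' (true, u) = cc u.
Proof.
rewrite /wdeg rsum_pair rsum_bool /w' /doubled /= rsum0 Rplus_0_l.
rewrite (@rsum_only _ u) ?eqxx //.
by move=> v Hv; rewrite eq_sym (negbTE Hv).
Qed.

Lemma sum_cc : \rsum_(u : X) cc u = W / C.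
Proof.
rewrite /cc (@rsum_ext X _ (fun u => W / C * sigma u)); last by move=> u; field; lra.
by rewrite rsum_scal (proj2 Hsigma) Rmult_1_r.
Qed.

Lemma Wtot' : Wtot w' = W * (C + 2) / C.
Proof.
rewrite /Wtot rsum_pair rsum_bool.
have -> : \rsum_(u : X) wdeg w' (true, u) = \rsum_(u : X) cc u.
  by apply: rsum_ext => u; rewrite wdegT.
have -> : \rsum_(u : X) wdeg w' (false, u) = \rsum_(u : X) (wdeg w u + cc u).
  by apply: rsum_ext => u; rewrite wdegF.
rewrite rsum_add sum_cc -/(Wtot w) -/W; field; lra.
Qed.

Definition Sp := [set a : bool * X | a.1 && (a.2 \in S)].
Definition Mp := [set a : bool * X | ~~ a.1 && (a.2 \in M)].

Lemma cc0 u : u \notin S -> cc u = 0.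
Proof.
move=> Hu; have : sigma u = 0.
  apply: NNPP => H; apply: (negP Hu); by apply/HS.
by rewrite /cc => ->; rewrite /Rdiv !Rmult_0_l.
Qed.

Lemma cc_pos u : u \in S -> 0 < cc u.
Proof.
move=> /HS Hu; have := proj1 Hsigma u => H0.
have W0 := Wpos; rewrite /cc /Rdiv.
apply: Rmult_lt_0_compat; last exact: Rinv_0_lt_compat.
apply: Rmult_lt_0_compat => //; lra.
Qed.

Lemma piset' : piset w' Sp = 1 / (C + 2).
Proof.
rewrite /piset rsum_in rsum_pair rsum_bool.
have -> : \rsum_(u : X) (if (false, u) \in Sp then Defs.pi w' (false, u) else 0) = 0.
  apply: big1 => u _; by rewrite /Sp inE /=.
have -> : \rsum_(u : X) (if (true, u) \in Sp then Defs.pi w' (true, u) else 0) =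
          \rsum_(u : X) (/ Wtot w' * cc u).
  apply: rsum_ext => u; rewrite /Sp inE /= /Defs.pi wdegT.
  case: (boolP (u \in S)) => Hu; first by rewrite /Rdiv Rmult_comm.
  by rewrite cc0 // Rmult_0_r.
rewrite rsum_scal sum_cc Wtot'.
have := Wpos; rewrite -/W => W0; field; lra.
Qed.

Definition Kf (tau : X -> R) : R :=
  \rsum_(u : X) (if Rlt_dec 0 (cc u) then tau u ^ 2 / cc u else 0).

Lemma energy_split (P : bool * X -> bool * X -> R) (tau : X -> R) :
  (forall u, P (true, u) (false, u) = tau u) ->
  (forall u, P (false, u) (true, u) = - tau u) ->
  energy w' P = energy w (fun u v => P (false, u) (false, v)) + Kf tau.
Proof.
move=> HT HF.
have ET : forall u, \rsum_(b : bool * X) (if Rlt_dec 0 (w' (true, u) b) then P (true, u) b ^ 2 / w' (true, u) b else 0)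
   = (if Rlt_dec 0 (cc u) then tau u ^ 2 / cc u else 0).
  move=> u; rewrite rsum_pair rsum_bool.
  have -> : \rsum_(v : X) (if Rlt_dec 0 (w' (true, u) (true, v)) then P (true, u) (true, v) ^ 2 / w' (true, u) (true, v) else 0) = 0.
    apply: big1 => v _; rewrite /w' /doubled /=; case: Rlt_dec => //= H; lra.
  rewrite Rplus_0_l (@rsum_only _ u).
    by rewrite /w' /doubled /= eqxx HT.
  move=> v Hv; rewrite /w' /doubled /= eq_sym (negbTE Hv); case: Rlt_dec => //= H; lra.
have EF : forall u, \rsum_(b : bool * X) (if Rlt_dec 0 (w' (false, u) b) then P (false, u) b ^ 2 / w' (false, u) b else 0)
   = (if Rlt_dec 0 (cc u) then tau u ^ 2 / cc u else 0) +
     \rsum_(v : X) (if Rlt_dec 0 (w u v) then P (false, u) (false, v) ^ 2 / w u v else 0).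
  move=> u; rewrite rsum_pair rsum_bool; congr (_ + _).
  rewrite (@rsum_only _ u).
    rewrite /w' /doubled /= eqxx HF.
    have -> : - tau u * (- tau u * 1) = tau u * (tau u * 1) by ring.
    by [].
  move=> v Hv; rewrite /w' /doubled /= eq_sym (negbTE Hv); case: Rlt_dec => //= H; lra.
rewrite /energy rsum_pair rsum_bool.
rewrite (@rsum_ext X _ _ ET) (@rsum_ext X _ _ EF) rsum_add -/(Kf tau).
field.
Qed.

Section Tau.
Variable tau : X -> R.
Hypothesis Htd : distribution tau.
Hypothesis Hts : supp_sub tau S.

Lemma tau0S u : u \notin S -> tau u = 0.
Proof. move=> Hu; apply: NNPP => H; apply: (negP Hu); exact: Hts. Qed.

Lemma tau0M u : u \in M -> tau u = 0.
Proof.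
move=> Hu; apply: tau0S; apply/negP => HuS; move: (notSM _ HuS); by rewrite Hu.
Qed.

Lemma cc0tau u : cc u = 0 -> tau u = 0.
Proof.
move=> H; apply: tau0S; apply/negP => HuS; have := cc_pos _ HuS; lra.
Qed.

Definition liftP (p : X -> X -> R) (a b : bool * X) : R :=
  match a, b with
  | (false, u), (false, v) => p u v
  | (true, u), (false, v) => if u == v then tau u else 0
  | (false, u), (true, v) => if u == v then - tau u else 0
  | (true, _), (true, _) => 0
  end.

Lemma lift1_sum : \rsum_(a : bool * X) lift1 tau a = 1.
Proof.
rewrite rsum_pair rsum_bool /lift1 /=.
rewrite (@big1 _ _ _ _ _ _ (fun u : X => 0)) // Rplus_0_r; exact: (proj2 Htd).
Qed.

Lemma lift1_Mp a : a \in Mp -> lift1 tau a = 0.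
Proof. case: a => [[] u]; by rewrite /Mp inE. Qed.

Lemma lift_flow p : unit_flow w tau M p -> unit_flow w' (lift1 tau) Mp (liftP p).
Proof.
move=> [A [B [D _]]].
have B' : forall a b, liftP p a b = - liftP p b a.
  move=> [[] u] [[] v] /=; try (by rewrite B); try lra.
  - rewrite eq_sym; case: eqP => [->|_]; lra.
  - rewrite eq_sym; case: eqP => [->|_]; lra.
have D' : forall a, a \notin Mp -> \rsum_(b : bool * X) liftP p a b = lift1 tau a.
  move=> [[] u] Ha; rewrite rsum_pair rsum_bool /lift1 /=.
  - rewrite (@big1 _ _ _ _ _ _ (fun v : X => 0)) // Rplus_0_l.
    rewrite (@rsum_only _ u) ?eqxx // => v Hv; by rewrite eq_sym (negbTE Hv).
  - have Hu : u \notin M by move: Ha; rewrite /Mp inE.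
    rewrite D // (@rsum_only _ u) ?eqxx; first lra.
    move=> v Hv; by rewrite eq_sym (negbTE Hv).
split; [|split; [|split]] => //.
- move=> [[] u] [[] v] /=; rewrite /w' /doubled //.
  + case: eqP => // -> H; rewrite cc0tau //.
  + case: eqP => // -> H; rewrite cc0tau //; lra.
  + by apply: A.
- exact: (flow_Msum _ _ _ _ B' D' lift1_sum lift1_Mp).
Qed.

Lemma restrict_flow P : unit_flow w' (lift1 tau) Mp P ->
  unit_flow w tau M (fun u v => P (false, u) (false, v)) /\
  (forall u, P (true, u) (false, u) = tau u) /\
  (forall u, P (false, u) (true, u) = - tau u).
Proof.
move=> [A [B [D _]]].
have PT : forall u, P (true, u) (false, u) = tau u.
  move=> u; have := D (true, u); rewrite /Mp inE /= => /(_ isT).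
  rewrite rsum_pair rsum_bool /lift1 /=.
  rewrite (@big1 _ _ _ _ _ _ (fun v : X => P (true, u) (true, v))); last first.
    by move=> v _; apply: A; rewrite /w' /doubled.
  rewrite Rplus_0_l (@rsum_only _ u) //.
  move=> v Hv; apply: A; by rewrite /w' /doubled /= eq_sym (negbTE Hv).
have PF : forall u, P (false, u) (true, u) = - tau u by move=> u; rewrite B PT.
split; [|split] => //.
have D2 : forall u, u \notin M -> \rsum_(v : X) P (false, u) (false, v) = tau u.
  move=> u Hu; have := D (false, u); rewrite /Mp inE /= Hu => /(_ isT).
  rewrite rsum_pair rsum_bool /lift1 /= (@rsum_only _ u) ?PF; first lra.
  move=> v Hv; apply: A; by rewrite /w' /doubled /= eq_sym (negbTE Hv).
have B2 : forall u v, P (false, u) (false, v) = - P (false, v) (false, u) by move=> u v; apply: B.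
split; [|split; [|split]] => //.
- move=> u v H; apply: A; by rewrite /w' /doubled.
- exact: (flow_Msum _ _ _ _ B2 D2 (proj2 Htd) tau0M).
Qed.


Lemma Kf_eq : Kf tau = C / W * \rsum_(u in S) (tau u ^ 2 / sigma u).
Proof.
rewrite rsum_in -rsum_scal /Kf; apply: rsum_ext => u.
have W0 := Wpos.
case: (boolP (u \in S)) => Hu.
- have Hc := cc_pos _ Hu; have Hs : sigma u <> 0 by apply/HS.
  case: Rlt_dec => //= _; rewrite /cc -/W; field; repeat split; lra.
- rewrite cc0 //; case: Rlt_dec => /= H; first lra; ring.
Qed.

Lemma Kf_lb : C / W <= Kf tau.
Proof.
have W0 := Wpos.
rewrite Kf_eq -{1}(Rmult_1_r (C / W)).
apply: Rmult_le_compat_l; first by apply: Rlt_le; apply: Rdiv_lt_0_compat.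
have E : \rsum_(u : X) (2 * tau u - sigma u) = 1.
  rewrite rsum_sub rsum_scal (proj2 Htd) (proj2 Hsigma); ring.
rewrite -E rsum_in; apply: rsum_le => u.
case: (boolP (u \in S)) => Hu.
- have Hs : 0 < sigma u.
    have := proj1 Hsigma u; have : sigma u <> 0 by apply/HS. lra.
  have Hsq : 0 <= (tau u - sigma u) ^ 2 by apply: pow2_ge_0.
  apply: (Rmult_le_reg_r (sigma u)) => //.
  rewrite /Rdiv Rmult_assoc Rinv_l; last lra.
  nra.
- rewrite tau0S //.
  have : sigma u = 0 by apply: NNPP => H; apply: (negP Hu); apply/HS.
  move=> ->; lra.
Qed.

Lemma Reff'_glb (s' : bool * X -> R) : (forall a, s' a = lift1 tau a) ->
  Reff w' s' Mp = Reff w tau M + Kf tau /\ 0 <= Reff w tau M.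
Proof.
move=> Hs.
have [Hg H0] := Reff_glb X w M tau Hw Hconn HM Htd tau0M.
split => //; rewrite /Reff; apply: Rinf_eq.
apply: (glb_shift _ _ _ _ Hg) => e; split.
- move=> [P [HP ->]].
  have HP' : unit_flow w' (lift1 tau) Mp P by apply: (unit_flow_ext _ _ _ _ _ _ Hs).
  have [H1 [H2 H3]] := restrict_flow P HP'.
  exists (fun u v => P (false, u) (false, v)); split => //.
  rewrite (energy_split P tau H2 H3); ring.
- move=> [p [Hp E]].
  exists (liftP p); split.
    apply: (unit_flow_ext _ _ (lift1 tau)) => //; exact: lift_flow.
  rewrite (energy_split (liftP p) tau).
  + rewrite -/(energy w p) -E; ring.
  + by move=> u; rewrite /= eqxx.
  + by move=> u; rewrite /= eqxx.
Qed.

End Tau.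

Lemma main_in : piset w' Sp = 1 / (C + 2) /\
  (forall (rho : X -> R) (p : R),
     distribution rho -> supp_sub rho S -> 0 < p ->
     \rsum_(u in S) (rho u ^ 2 / sigma u) = 1 / p ->
     Ceff w' (lift1 rho) Mp = (Ceff w rho M / C + 1 / p) * (C + 2) /\
     1 / (Ceff_set w' Sp Mp * piset w' Sp)
       >= 1 / 2 * Rmin p (C / Ceff w rho M)).
Proof.
split; first exact: piset'.
move=> rho p Hd Hsupp Hp Hsum.
have W0 := Wpos.
have [HR HR0] := Reff'_glb rho Hd Hsupp (lift1 rho) (fun a => erefl).
have HK : Kf rho = C / W * (1 / p) by rewrite Kf_eq // Hsum.
set R0 := Reff w rho M in HR HR0 *.
have HCe : Ceff w' (lift1 rho) Mp = W * (C + 2) / C * (R0 + C / W * (1 / p)).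
  by rewrite /Ceff Wtot' HR HK.
split.
  rewrite HCe /Ceff -/W -/R0; field; repeat split; lra.
set Q := (fun r => exists sigma', distribution sigma' /\ supp_sub sigma' Sp /\ r = Reff w' sigma' Mp).
have Hlb : forall r, Q r -> C / W <= r.
  move=> r [s' [[Hs0 Hs1] [Hss ->]]].
  set tau := fun u => s' (true, u).
  have HsF : forall u, s' (false, u) = 0.
    move=> u; apply: NNPP => H; move: (Hss _ H); by rewrite /Sp inE.
  have Hlift : forall a, s' a = lift1 tau a by case=> [[] u]; rewrite /lift1 /= ?HsF.
  have Htd : distribution tau.
    split; first by move=> u; apply: Hs0.
    rewrite -Hs1 rsum_pair rsum_bool (@big1 _ _ _ _ _ _ (fun u : X => s' (false, u))).
      by rewrite Rplus_0_r.
    by move=> u _; rewrite HsF.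
  have Hts : supp_sub tau S.
    move=> u H; move: (Hss _ H); by rewrite /Sp inE.
  have [E1 E2] := Reff'_glb tau Htd Hts s' Hlift.
  rewrite E1; have := Kf_lb tau Htd Hts; lra.
have Hdl : distribution (lift1 rho).
  split; first by case=> [[] u]; rewrite /lift1 /=; [apply: (proj1 Hd)|lra].
  exact: lift1_sum.
have Hsl : supp_sub (lift1 rho) Sp.
  case=> [[] u]; rewrite /lift1 /= => H; last by [].
  rewrite /Sp inE /=; exact: Hsupp.
have [m Hm] : exists m, is_glb Q m.
  apply: (glb_exists _ (C / W)) => //.
  by exists (Reff w' (lift1 rho) Mp), (lift1 rho).
have HmQ : Ceff_set w' Sp Mp = Wtot w' * m by rewrite /Ceff_set /Reff_set (Rinf_eq _ _ Hm).
have Hm1 : C / W <= m by apply: (proj2 Hm).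
have Hm2 : m <= R0 + C / W * (1 / p).
  rewrite -HK -HR; apply: (proj1 Hm); by exists (lift1 rho).
rewrite HmQ piset' Wtot' -/W /Ceff -/W -/R0.
have Hx : W * (C + 2) / C * m * (1 / (C + 2)) = W * m / C by field; lra.
rewrite Hx.
have Hxpos : 0 < W * m / C.
  apply: Rdiv_lt_0_compat => //; apply: Rmult_lt_0_compat => //.
  have : 0 < C / W by apply: Rdiv_lt_0_compat.
  lra.
case: (Req_dec R0 0) => HR00.
  rewrite HR00 Rmult_0_r /Rdiv Rinv_0 Rmult_0_r Rmin_right; last lra.
  apply: Rle_ge; rewrite Rmult_0_r Rmult_1_l; left; apply: Rinv_0_lt_compat.
  by rewrite /Rdiv in Hxpos.
have -> : C / (W * R0) = 1 / (W * R0 / C) by field; repeat split; lra.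
apply: final_ineq => //.
- apply: Rdiv_lt_0_compat => //; apply: Rmult_lt_0_compat; lra.
- apply: (Rmult_le_reg_r C) => //.
  have -> : W * m / C * C = W * m by field; lra.
  have -> : (W * R0 / C + 1 / p) * C = W * (R0 + C / W * (1 / p)) by field; repeat split; lra.
  apply: Rmult_le_compat_l; lra.
Qed.

End Doubled.

Theorem mainTheorem7 (X : finType) (w : X -> X -> R) (M S : {set X})
  (sigma : X -> R) (C : R)
  (Hw : weighted_graph w) (Hconn : connected w)
  (HM : M != set0)
  (Hsigma : distribution sigma)
  (HS : forall u, u \in S <-> sigma u <> 0)
  (HSM : [disjoint S & M])
  (HC : 0 < C) :
  let w' := doubled w sigma C in
  let S' := [set a : bool * X | a.1 && (a.2 \in S)] in
  let M' := [set a : bool * X | ~~ a.1 && (a.2 \in M)] in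
  piset w' S' = 1 / (C + 2) /\
  (forall (rho : X -> R) (p : R),
     distribution rho -> supp_sub rho S -> 0 < p ->
     \rsum_(u in S) (rho u ^ 2 / sigma u) = 1 / p ->
     Ceff w' (lift1 rho) M' = (Ceff w rho M / C + 1 / p) * (C + 2) /\
     1 / (Ceff_set w' S' M' * piset w' S')
       >= 1 / 2 * Rmin p (C / Ceff w rho M)).
Proof.
move=> w' S' M'.
exact: (main_in X w sigma C M S Hw Hconn HM Hsigma HS HSM HC).
Qed.
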